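(* Let $p>3$ and $q>6p^4$ be primes, $G=\mathbb{Z}_6^5\times\mathbb{Z}_q$, $H=\mathbb{Z}_p^4$, let $A\subset G$ be the set defined in the context (which is a tile of $G$) and let $B\subset H$ be a spectral set with $|B|=2p$. Then for every map $t:A\to H$, the set $P_t=\bigcup_{a\in A}\{a\}\times(t(a)+B)$ pd-tiles $G\times H$ weakly.
   Context: For a finite abelian group $E$, a set $X\subset E$ pd-tiles $E$ (weakly) if there is a nonnegative function $h:E\to\mathbb{R}$ with $h(0)=1$, $1_X*h=1_E$ (convolution), and $\hat h\ge 0$, where $\hat f(\gamma)=\sum_{x\in E}f(x)\gamma(x)$ for characters $\gamma$. Known fact (may be used): in a finite abelian group, every tile and every spectral set pd-tiles the group; the set $A$ below tiles $G$. A set $X$ is spectral if there is a set $S$ of characters with $|S|=|X|$ and $\hat 1_X(s-s')=0$ for distinct $s,s'\in S$; it is a tile if there is $\Lambda$ with $X+\Lambda=E$ with each element uniquely represented. Construction of $A$: let $v=(1,2,3,4,5)\in\mathbb{Z}_6^5$; for $\pi\in S_5$ let $\pi(v)$ be the vector with permuted coordinates and $A_\pi=\{x\in\mathbb{Z}_6^5:\langle \pi(v),x\rangle\equiv 0\pmod 6\}$. Enumerate $S_5$ as $\pi_0,\dots,\pi_{119}$; for $0\le k\le119$ set $A_k=A_{\pi_k}\times\{k\}$, for $120\le k\le q-1$ set $A_k=A_{\pi_0}\times\{k\}$, and $A=\bigcup_{k=0}^{q-1}A_k$. *)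

(* Defs.v *)
From HB Require Import structures.
From mathcomp Require Import all_boot all_order all_algebra perm algC.
Set Implicit Arguments. Unset Strict Implicit. Unset Printing Implicit Defensive.
Import Order.TTheory GRing.Theory Num.Theory.
Local Open Scope ring_scope.

(* Complex-valued functions are valued in algC (algebraic complex numbers);
   for z : algC, [0 <= z] means z is real and nonnegative. *)

Definition is_character (E : finZmodType) (g : E -> algC) : Prop :=
  g 0 = 1 /\ forall x y : E, g (x + y) = g x * g y.

Definition fourier (E : finZmodType) (f : E -> algC) (g : E -> algC) : algC :=
  \sum_(x : E) f x * g x.

Definition indicator (E : finZmodType) (X : {set E}) (x : E) : algC :=
  (x \in X)%:R.

Definition conv (E : finZmodType) (f h : E -> algC) (x : E) : algC :=
  \sum_(y : E) f y * h (x - y).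

Definition pd_tiles (E : finZmodType) (X : {set E}) : Prop :=
  exists h : E -> algC,
    [/\ forall x, 0 <= h x,
        h 0 = 1,
        forall x, conv (indicator X) h x = 1
      & forall g, is_character g -> 0 <= fourier h g].

(* Difference of characters in the (additively written) dual group. *)
Definition char_sub (E : finZmodType) (s s' : E -> algC) (x : E) : algC :=
  s x / s' x.

(* X is spectral: there is a family S = {s_0,...,s_{|X|-1}} of characters,
   with |S| = |X|, such that \hat 1_X (s - s') = 0 for distinct s, s' in S.
   (Distinctness of the s_i follows from the orthogonality when X <> set0.) *)
Definition spectral (E : finZmodType) (X : {set E}) : Prop :=
  exists S : 'I_#|X| -> (E -> algC),
    (forall i, is_character (S i)) /\
    (forall i j, i != j -> fourier (indicator X) (char_sub (S i) (S j)) = 0).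

Definition GZ6 := 'rV['Z_6]_5.
Definition Gtype (q : nat) := (GZ6 * 'Z_q)%type.
Definition Htype (p : nat) := 'rV['Z_p]_4.

(* A_pi = { x in Z_6^5 : < pi(v), x > = 0 mod 6 },  v = (1,2,3,4,5),
   pi(v)_i = v_{pi(i)}. *)
Definition Api (pi : 'S_5) : {set GZ6} :=
  [set x : GZ6 | \sum_(i < 5) ((pi i).+1)%:R * x ord0 i == 0].

(* Given an enumeration e : 'I_120 -> 'S_5 of S_5 (pi_k = e k), the set
   A = U_k A_k, A_k = A_{pi_k} x {k} for k < 120, A_{pi_0} x {k} otherwise. *)
Definition pi_of (e : 'I_120 -> 'S_5) (k : nat) : 'S_5 :=
  if (k < 120)%N then e (inord k) else e ord0.

Definition setA (q : nat) (e : 'I_120 -> 'S_5) : {set Gtype q} :=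
  [set a : Gtype q | a.1 \in Api (pi_of e (val a.2))].

Definition Etype (q p : nat) := (Gtype q * Htype p)%type.
HB.instance Definition _ (q p : nat) := GRing.Zmodule.on (Etype q p).
HB.instance Definition _ (q p : nat) := Finite.on (Etype q p).

Definition Pt (q p : nat) (e : 'I_120 -> 'S_5) (B : {set Htype p})
    (t : Gtype q -> Htype p) : {set Etype q p} :=
  [set z : Etype q p | (z.1 \in setA q e) && (z.2 - t z.1 \in B)].

(* Main.v *)
Require Import Defs.
From HB Require Import structures.
From mathcomp Require Import all_boot all_order all_algebra perm algC.
From mathcomp.algebra_tactics Require Import ring.
Set Implicit Arguments. Unset Strict Implicit. Unset Printing Implicit Defensive.
Import Order.TTheory GRing.Theory Num.Theory.
Local Open Scope ring_scope.

Section Chars.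
Variable E : finZmodType.

Lemma char_ne0 (g : E -> algC) x : is_character g -> g x != 0.
Proof.
move=> [g0 gM]; apply/eqP => gx0.
by move: (gM x (-x)); rewrite subrr g0 gx0 mul0r => /eqP; rewrite oner_eq0.
Qed.

Lemma char_sub' (g : E -> algC) x y : is_character g -> g (x - y) = g x / g y.
Proof.
move=> gc; have [g0 gM] := gc.
have ny : g (- y) = (g y)^-1.
  apply: (mulfI (char_ne0 y gc)); rewrite -gM subrr g0 mulfV //.
  exact: char_ne0.
by rewrite gM ny.
Qed.

Lemma char_norm (g : E -> algC) x : is_character g -> `|g x| = 1.
Proof.
move=> gc; have [g0 gM] := gc.
set T := \sum_(y : E) `|g y|.
have TE : T = `|g x| * T.
  rewrite /T {1}(reindex_inj (addrI x)) /= mulr_sumr.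
  by apply: eq_bigr => y _; rewrite gM normrM.
have Tpos : 0 < T.
  rewrite /T (bigD1 0) //= g0 normr1.
  apply: (lt_le_trans ltr01); rewrite lerDl; apply: sumr_ge0 => y _.
  exact: normr_ge0.
by move: TE; rewrite -{1}(mul1r T) => /(mulIf (lt0r_neq0 Tpos)) <-.
Qed.

Lemma char_conj (g : E -> algC) x : is_character g -> (g x)^* = (g x)^-1.
Proof.
move=> gc; have gx0 := char_ne0 x gc.
apply: (mulfI gx0); rewrite -normCK char_norm // expr1n mulfV //.
Qed.

Lemma char_sum_ge0 (g : E -> algC) : is_character g -> 0 <= \sum_(x : E) g x.
Proof.
move=> gc; have [g0 gM] := gc.
have [all1|] := boolP [forall x, g x == 1].
  rewrite (eq_bigr (fun _ => 1)); last by move=> x _; apply/eqP; move/forallP: all1.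
  by rewrite sumr_const ler0n.
rewrite negb_forall => /existsP [y gy1].
suff -> : \sum_(x : E) g x = 0 by [].
have SE : \sum_(x : E) g x = g y * \sum_(x : E) g x.
  rewrite {1}(reindex_inj (addrI y)) /= mulr_sumr.
  by apply: eq_bigr => z _; rewrite gM.
have : (1 - g y) * \sum_(x : E) g x = 0 by rewrite mulrBl mul1r -SE subrr.
by move/eqP; rewrite mulf_eq0 subr_eq0 eq_sym (negbTE gy1) /= => /eqP.
Qed.

Lemma char_mul (g1 g2 : E -> algC) : is_character g1 -> is_character g2 ->
  is_character (fun x => g1 x * g2 x).
Proof.
move=> [a0 aM] [b0 bM]; split; first by rewrite a0 b0 mulr1.
by move=> x y; rewrite aM bM mulrACA.
Qed.

Lemma char_inv (g : E -> algC) : is_character g -> is_character (fun x => (g x)^-1).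
Proof.
move=> [a0 aM]; split; first by rewrite a0 invr1.
by move=> x y; rewrite aM invfM.
Qed.


Lemma sum_ind (X : {set E}) (f : E -> algC) :
  \sum_(y : E) indicator X y * f y = \sum_(y in X) f y.
Proof.
rewrite [RHS]big_mkcond; apply: eq_bigr => y _; rewrite /indicator.
by case: (y \in X); rewrite ?mul1r ?mul0r.
Qed.

Lemma spectral_pd (X : {set E}) : spectral X -> (0 < #|X|)%N -> pd_tiles X.
Proof.
case=> S [Sc Sorth] Xpos; set n := #|X| in S Sc Sorth Xpos *.
set N : algC := n%:R.
have N0 : N != 0 by rewrite pnatr_eq0 -lt0n.
have Sne i x : S i x != 0 by apply: char_ne0.
have orth i j : fourier (indicator X) (char_sub (S j) (S i)) = if j == i then N else 0.
  case: eqP => [->|/eqP ji]; last exact: Sorth.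
  rewrite /fourier sum_ind /char_sub (eq_bigr (fun _ => 1)); last by move=> y _; rewrite divff.
  by rewrite sumr_const.
have hE x : \sum_i \sum_j S i x / S j x = (\sum_i S i x) * (\sum_i S i x)^*.
  rewrite rmorph_sum mulr_suml; apply: eq_bigr => i _; rewrite mulr_sumr.
  by apply: eq_bigr => j _; rewrite -(char_conj _ (Sc j)).
exists (fun x => (N ^+ 2)^-1 * \sum_i \sum_j S i x / S j x); split.
- move=> x; rewrite hE; apply: mulr_ge0; last exact: mul_conjC_ge0.
  by rewrite invr_ge0 exprn_ge0 // ler0n.
- rewrite (eq_bigr (fun _ => N)); last first.
    move=> i _; rewrite (eq_bigr (fun _ => 1)); last by move=> j _; rewrite !(Sc _).1 divr1.
    by rewrite sumr_const card_ord.
  by rewrite sumr_const card_ord -mulr_natr mulVf // expf_neq0.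
- move=> x; rewrite /conv.
  transitivity ((N ^+ 2)^-1 * \sum_y \sum_i \sum_j
      indicator X y * (S i (x - y) / S j (x - y))).
    rewrite mulr_sumr; apply: eq_bigr => y _; rewrite mulrCA; congr (_ * _).
    rewrite mulr_sumr; apply: eq_bigr => i _; by rewrite mulr_sumr.
  transitivity ((N ^+ 2)^-1 * \sum_i \sum_j (S i x / S j x) *
      fourier (indicator X) (char_sub (S j) (S i))).
    congr (_ * _); rewrite exchange_big; apply: eq_bigr => i _.
    rewrite exchange_big; apply: eq_bigr => j _.
    rewrite /fourier mulr_sumr; apply: eq_bigr => y _.
    rewrite !char_sub' // /char_sub.
    have := Sne i x; have := Sne j x; have := Sne i y; have := Sne j y.
    move=> h1 h2 h3 h4; field.
    by rewrite h1 h2 h3.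
  rewrite (eq_bigr (fun _ => N)); last first.
    move=> i _; rewrite (bigD1 i) //= orth eqxx divff // mul1r big1 ?addr0 //.
    by move=> j /negbTE ji; rewrite orth ji mulr0.
  by rewrite sumr_const card_ord -mulr_natr mulVf // expf_neq0.
- move=> g gc; rewrite /fourier.
  rewrite (eq_bigr (fun x => (N ^+ 2)^-1 *
      \sum_i \sum_j (S i x * (S j x)^-1 * g x))); last first.
    move=> x _; rewrite -mulrA; congr (_ * _); rewrite mulr_suml.
    by apply: eq_bigr => i _; rewrite mulr_suml.
  rewrite -mulr_sumr; apply: mulr_ge0.
    by rewrite invr_ge0 exprn_ge0 // ler0n.
  rewrite exchange_big; apply: sumr_ge0 => i _.
  rewrite exchange_big; apply: sumr_ge0 => j _.
  apply: char_sum_ge0; apply: char_mul => //; apply: char_mul => //.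
  exact: char_inv.
Qed.

Lemma sum_delta (f : E -> algC) w : \sum_(y : E) f y * (y == w)%:R = f w.
Proof.
rewrite (bigD1 w) //= eqxx mulr1 big1 ?addr0 // => y /negbTE ->.
by rewrite mulr0.
Qed.

Lemma subeq (x y d : E) : (x - y == d) = (y == x - d).
Proof. by apply/eqP/eqP => [<-|->]; rewrite subKr. Qed.

Lemma tile_pd (I : finType) (lam : I -> E) (X : {set E}) :
  0 \in X -> (forall y, \sum_i indicator X (y - lam i) = 1) -> pd_tiles X.
Proof.
move=> X0 til.
set N : algC := #|I|%:R.
have N0 : N != 0.
  rewrite pnatr_eq0 -lt0n; case: (pickP I) => [i _|I0].
    by apply/card_gt0P; exists i.
  move: (til 0); rewrite big1 => [H|i _]; last by have := I0 i.
  by move: (@oner_neq0 algC); rewrite -H eqxx.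
have inj : injective lam.
  move=> i j eij; apply/eqP; apply/negP => /negP ij.
  have := til (lam i); rewrite (bigD1 i) //= subrr {1}/indicator X0.
  move=> /(congr1 (fun z => z - 1)); rewrite addrC addrK subrr => H0.
  have ji : j != i by rewrite eq_sym.
  have nn : forall k, k != i -> 0 <= indicator X (lam i - lam k).
    by move=> k _; rewrite /indicator ler0n.
  have := psumr_eq0P nn H0 ji; rewrite -eij subrr /indicator X0 => /eqP.
  by rewrite oner_eq0.
have ind_ge0 y : 0 <= indicator X y by rewrite /indicator ler0n.
exists (fun z => N^-1 * \sum_i \sum_j (z == lam i - lam j)%:R); split.
- move=> x; apply: mulr_ge0; first by rewrite invr_ge0 ler0n.
  by apply: sumr_ge0 => i _; apply: sumr_ge0 => j _; apply: ler0n.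
- rewrite (eq_bigr (fun _ => 1)); last first.
    move=> i _; rewrite (bigD1 i) //= subrr eqxx big1 ?addr0 // => j ji.
    rewrite eq_sym subr_eq0; case: eqP => // /inj ij.
    by move: ji; rewrite ij eqxx.
  by rewrite sumr_const -/N mulVf.
- move=> x; rewrite /conv.
  transitivity (N^-1 * \sum_i \sum_j \sum_y
      indicator X y * (y == x - (lam i - lam j))%:R).
    rewrite (eq_bigr (fun y => N^-1 * (\sum_i \sum_j
       indicator X y * (x - y == lam i - lam j)%:R))); last first.
      move=> y _; rewrite mulrCA mulr_sumr; congr (_ * _); apply: eq_bigr => i _.
      by rewrite mulr_sumr.
    rewrite -mulr_sumr; congr (_ * _).
    rewrite exchange_big; apply: eq_bigr => i _.
    rewrite exchange_big; apply: eq_bigr => j _; apply: eq_bigr => y _.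
    by rewrite subeq.
  rewrite (eq_bigr (fun i => \sum_j indicator X ((x + lam j) - lam i))); last first.
    move=> i _; apply: eq_bigr => j _; rewrite sum_delta; congr indicator.
    by rewrite opprB addrA.
  rewrite exchange_big (eq_bigr (fun _ => 1)); last by move=> j _; apply: til.
  by rewrite sumr_const -/N mulVf.
- move=> g gc; rewrite /fourier.
  rewrite (eq_bigr (fun x => N^-1 * \sum_i \sum_j (g x * (x == lam i - lam j)%:R)));
    last first.
    move=> x _; rewrite -mulrA; congr (_ * _); rewrite mulr_suml.
    by apply: eq_bigr => i _; rewrite mulr_suml; apply: eq_bigr => j _; rewrite mulrC.
  rewrite -mulr_sumr; apply: mulr_ge0; first by rewrite invr_ge0 ler0n.
  rewrite exchange_big (eq_bigr (fun i => \sum_j g (lam i) * (g (lam j))^*)); last first.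
    move=> i _; rewrite exchange_big; apply: eq_bigr => j _.
    by rewrite sum_delta char_sub' // char_conj.
  rewrite (eq_bigr (fun i => g (lam i) * \sum_j (g (lam j))^*)); last first.
    by move=> i _; rewrite mulr_sumr.
  by rewrite -mulr_suml -rmorph_sum mul_conjC_ge0.
Qed.
End Chars.

Definition pp (G H : finZmodType) := (G * H)%type.
HB.instance Definition _ (G H : finZmodType) := GRing.Zmodule.on (pp G H).
HB.instance Definition _ (G H : finZmodType) := Finite.on (pp G H).

Lemma prod_pd (G H : finZmodType) (X : {set G}) (Y : {set H}) (t : G -> H) :
  pd_tiles X -> pd_tiles Y ->
  pd_tiles [set z : pp G H | (z.1 \in X) && (z.2 - t z.1 \in Y)].
Proof.
case=> [hA [hA0 hA1 hAc hAf]] [hB [hB0 hB1 hBc hBf]].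
exists (fun z => hA z.1 * hB z.2); split.
- by move=> z; apply: mulr_ge0.
- by rewrite /= hA1 hB1 mulr1.
- move=> [a0 x0]; rewrite /conv.
  transitivity (\sum_(a : G) \sum_(x : H) indicator X a * indicator Y (x - t a) *
     (hA (a0 - a) * hB (x0 - x))); last first.
    rewrite -[RHS](hAc a0) /conv; apply: eq_bigr => a _.
    rewrite -[RHS]mulr1 -(hBc (x0 - t a)) /conv mulr_sumr.
    rewrite (reindex_inj (addIr (t a))) /=; apply: eq_bigr => y _.
    rewrite addrK opprD addrA [x0 - _ - _]addrAC.
    by rewrite mulrACA.
  rewrite pair_big /=; apply: eq_bigr => [[a x]] _ /=.
  by rewrite /indicator inE /= -mulnb natrM.
- move=> g [g0 gM].
  have gE a x : g (a, x) = g (a, 0) * g (0, x).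
    by rewrite -gM; congr g; change ((a, x) = (a + 0, 0 + x)); rewrite addr0 add0r.
  have c1 : is_character (fun a : G => g (a, 0)).
    split => [|a b]; first exact: g0.
    by rewrite -gM; congr g; change ((a + b, 0) = (a + b, 0 + 0 : H)); rewrite addr0.
  have c2 : is_character (fun x : H => g (0, x)).
    split => [|a b]; first exact: g0.
    by rewrite -gM; congr g; change ((0, a + b) = (0 + 0 : G, a + b)); rewrite addr0.
  have -> : fourier (fun z : pp G H => hA z.1 * hB z.2) g =
      \sum_(a : G) \sum_(x : H) hA a * hB x * g (a, x).
    by rewrite pair_big /=; apply: eq_bigr => [[a x]].
  rewrite (eq_bigr (fun a => hA a * g (a, 0) * \sum_(x : H) hB x * g (0, x))).
    by rewrite -mulr_suml; apply: mulr_ge0; [exact: hAf | exact: hBf].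
  move=> a _; rewrite mulr_sumr; apply: eq_bigr => x _.
  by rewrite gE mulrACA.
Qed.

Definition fpi (pi : 'S_5) (x : GZ6) : 'Z_6 := \sum_(i < 5) ((pi i).+1)%:R * x ord0 i.

Lemma fpiB pi x y : fpi pi (x - y) = fpi pi x - fpi pi y.
Proof. by rewrite /fpi -sumrB; apply: eq_bigr => i _; rewrite !mxE mulrBr. Qed.

Lemma fpi0 pi : fpi pi 0 = 0.
Proof. by rewrite /fpi big1 // => i _; rewrite mxE mulr0. Qed.

Lemma fpi_delta pi i : fpi pi (delta_mx ord0 i) = ((pi i).+1)%:R.
Proof.
rewrite /fpi (bigD1 i) //= mxE !eqxx mulr1 big1 ?addr0 // => j /negbTE ji.
by rewrite mxE ji andbF mulr0.
Qed.

Definition w (pi : 'S_5) (o : option 'I_5) : 'Z_6 :=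
  if o is Some i then ((pi i).+1)%:R else 0.

Lemma vZ n : (n < 6)%N -> nat_of_ord (n%:R : 'Z_6) = n.
Proof. by move=> n6; rewrite val_Zp_nat // modn_small. Qed.

Lemma w_inj pi : injective (w pi).
Proof.
move=> [i|] [j|] //= /(congr1 (@nat_of_ord _)); rewrite ?vZ //;
  try by rewrite ltnS; apply: ltn_ord.
by move=> [] /val_inj/perm_inj ->.
Qed.

Lemma count1 pi (c : 'Z_6) : \sum_o ((c == w pi o)%:R : algC) = 1.
Proof.
have cw : (#|{: 'Z_6}| <= #|{: option 'I_5}|)%N by rewrite card_option !card_ord.
have := inj_card_onto (@w_inj pi) cw c.
case/codomP => o0 ->.
rewrite (bigD1 o0) //= eqxx big1 ?addr0 // => o oo0.
by rewrite (inj_eq (@w_inj pi)) eq_sym (negbTE oo0).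
Qed.

Lemma A_pd q (e : 'I_120 -> 'S_5) : pd_tiles (setA q e : {set pp GZ6 'Z_q}).
Proof.
pose lam (o : option 'I_5) : pp GZ6 'Z_q := if o is Some i then (delta_mx ord0 i, 0) else 0.
apply: (@tile_pd _ _ lam).
  rewrite inE inE; apply/eqP; apply: fpi0.
move=> [x k].
have E1 (z v : pp GZ6 'Z_q) : (z - v).1 = z.1 - v.1 :> GZ6 by [].
have E2 (z v : pp GZ6 'Z_q) : (z - v).2 = z.2 - v.2 :> 'Z_q by [].
have L2 o : (lam o).2 = 0 by case: o.
have L1 o : fpi (Defs.pi_of e (val k)) (lam o).1 = w (Defs.pi_of e (val k)) o.
  by case: o => [i|] /=; [exact: fpi_delta | exact: fpi0].
rewrite -(count1 (Defs.pi_of e (val k)) (fpi (Defs.pi_of e (val k)) x)).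
apply: eq_bigr => o _; rewrite /indicator inE E1 E2 L2 subr0 inE.
by rewrite -/(fpi _ _) fpiB subr_eq0 L1.
Qed.

Local Close Scope ring_scope.
Theorem lemma3p3 (p q : nat) (e : 'I_120 -> 'S_5) (B : {set Htype p})
    (t : Gtype q -> Htype p) :
  prime p -> 3 < p -> prime q -> 6 * p ^ 4 < q ->
  bijective e ->
  spectral B -> #|B| = 2 * p ->
  pd_tiles (Pt e B t).
Proof.
move=> pp_ _ _ _ _ sB cB.
have hB : pd_tiles B.
  by apply: spectral_pd sB _; rewrite cB muln_gt0 (prime_gt0 pp_).
have H := @prod_pd (pp GZ6 'Z_q) (Htype p) _ _ t (A_pd q e) hB.
exact H.
Qed.
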